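(* Let $\{g_1,\dots,g_p\}\subset\mathbb{N}^2$ be the minimal system of generators of a semigroup $\mathcal{F}$, and let $\tau=\{tg_1\mid t\in\mathbb{Q}\}$ be an extremal ray of $\mathcal{F}$. Assume that $g_1$ generates $\mathbb{N}^2\cap\tau$. Let $\{s_1,\dots,s_t\}$ be the minimal system of generators of a subsemigroup of $\mathbb{N}^2\cap\tau$, and let $0<\lambda_1<\cdots<\lambda_t$ be the integers with $s_i=\lambda_ig_1$. Let $\mathcal{F}'$ be the semigroup generated by $B=B_1\cup B_2$, where $$B_1=\{s_1,\dots,s_t,g_2,\dots,g_p\},\qquad B_2=\bigcup_{i=2}^p\{g_i+g_1,\dots,g_i+(\lambda_t-1)g_1\}.$$ Then $\mathcal{F}'\cap\tau=\langle s_1,\dots,s_t\rangle$ and $\mathcal{F}'\setminus\tau=\mathcal{F}\setminus\tau$.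
   Context: $\mathbb{N}=\{0,1,2,\dots\}$. For $\{a_1,\dots,a_r\}\subseteq\mathbb{N}^2$, $\langle a_1,\dots,a_r\rangle=\{\sum\lambda_ja_j\mid\lambda_j\in\mathbb{N}\}$ is the semigroup generated by them; a minimal system of generators is a generating set no proper subset of which generates. An extremal ray of $\mathcal{F}$ is a boundary ray of the cone of non-negative rational combinations of elements of $\mathcal{F}$. *)

(* Defs.v *)
From mathcomp Require Import all_boot all_order all_algebra.
Set Implicit Arguments. Unset Strict Implicit. Unset Printing Implicit Defensive.
Import Order.TTheory GRing.Theory Num.Theory.
Local Open Scope ring_scope.

Definition pt := (nat * nat)%type.
Definition ptadd (a b : pt) : pt := (a.1 + b.1, a.2 + b.2)%N.
Definition ptscale (k : nat) (a : pt) : pt := (k * a.1, k * a.2)%N.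

Definition gen (A : seq pt) (x : pt) : Prop :=
  exists lam : nat -> nat,
    x = (\sum_(i < size A) lam i * (nth (0,0)%N A i).1,
         \sum_(i < size A) lam i * (nth (0,0)%N A i).2)%N.

Definition is_min_gens (A : seq pt) (F : pt -> Prop) : Prop :=
  uniq A /\ (forall x, F x <-> gen A x) /\
  (forall B : seq pt, {subset B <= A} -> (forall x, F x <-> gen B x) ->
     {subset A <= B}).

Definition cone (A : seq pt) (v : rat * rat) : Prop :=
  exists q : nat -> rat, (forall i, 0 <= q i) /\
    v = (\sum_(i < size A) q i * ((nth (0,0)%N A i).1)%:R,
         \sum_(i < size A) q i * ((nth (0,0)%N A i).2)%:R).

Definition on_line (g : pt) (v : rat * rat) : Prop :=
  exists t : rat, v = (t * (g.1)%:R, t * (g.2)%:R).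

Definition embQ (x : pt) : rat * rat := ((x.1)%:R, (x.2)%:R).

Definition extremal_ray (A : seq pt) (g : pt) : Prop :=
  g != (0,0)%N /\ cone A (embQ g) /\
  forall x y : rat * rat, cone A x -> cone A y ->
    on_line g (x.1 + y.1, x.2 + y.2) -> on_line g x /\ on_line g y.

(* Main.v *)
Require Import Defs.
From mathcomp Require Import all_boot all_order all_algebra.
From mathcomp Require Import zify ring.
Import Order.TTheory GRing.Theory Num.Theory.
Set Implicit Arguments. Unset Strict Implicit. Unset Printing Implicit Defensive.

Inductive G (A : seq pt) : pt -> Prop :=
| G0 : G A (0,0)%N
| GS a y : a \in A -> G A y -> G A (ptadd a y).
Arguments GS {A a y}.

Ltac ptsolve := rewrite /ptadd /ptscale /=; congr pair; nia.

Lemma ptaddC u v : ptadd u v = ptadd v u.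
Proof. ptsolve. Qed.
Lemma ptaddA u v w : ptadd u (ptadd v w) = ptadd (ptadd u v) w.
Proof. ptsolve. Qed.
Lemma ptadd0 u : ptadd (0,0)%N u = u.
Proof. by case: u. Qed.
Lemma ptaddx0 u : ptadd u (0,0)%N = u.
Proof. by rewrite ptaddC ptadd0. Qed.
Lemma ptscaleS n a : ptscale n.+1 a = ptadd a (ptscale n a).
Proof. ptsolve. Qed.
Lemma ptscaleD m n a : ptscale (m+n) a = ptadd (ptscale m a) (ptscale n a).
Proof. ptsolve. Qed.
Lemma ptscaleM m n a : ptscale (m*n) a = ptscale m (ptscale n a).
Proof. by rewrite /ptscale /= !mulnA. Qed.

Lemma G_add A x y : G A x -> G A y -> G A (ptadd x y).
Proof.
elim=> [|a z Ha _ IH] Hy; first by rewrite ptadd0.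
rewrite -ptaddA; exact: GS Ha (IH Hy).
Qed.
Lemma G_mem A a : a \in A -> G A a.
Proof. move=> Ha; have := GS Ha (G0 A). by rewrite ptaddx0. Qed.
Lemma G_scale A n a : a \in A -> G A (ptscale n a).
Proof.
move=> Ha; elim: n => [|n IH]; first exact: G0.
rewrite ptscaleS; exact: GS.
Qed.
Lemma G_trans A A' x : (forall a, a \in A -> G A' a) -> G A x -> G A' x.
Proof. move=> H; elim=> [|a y Ha _ IH]; [exact: G0 | exact: G_add (H a Ha) IH]. Qed.
Lemma G_sub A A' x : {subset A <= A'} -> G A x -> G A' x.
Proof. move=> H; apply: G_trans => a Ha; apply: G_mem; exact: H. Qed.

Lemma gen_zero A : gen A (0,0)%N.
Proof.
exists (fun _ => 0%N); congr pair; rewrite big1 // => i _; by rewrite mul0n.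
Qed.
Lemma gen_add A x y : gen A x -> gen A y -> gen A (ptadd x y).
Proof.
move=> [lx ->] [ly ->]; exists (fun i => lx i + ly i)%N.
rewrite /ptadd /=; congr pair; rewrite -big_split /=; apply: eq_bigr => i _;
  by rewrite mulnDl.
Qed.
Lemma gen_nil x : gen [::] x <-> x = (0,0)%N.
Proof.
split; first by move=> [lam ->]; rewrite !big_ord0.
move=> ->; exact: gen_zero.
Qed.
Lemma gen_cons a A x :
  gen (a :: A) x <-> exists n y, gen A y /\ x = ptadd (ptscale n a) y.
Proof.
split.
- move=> [lam ->]; exists (lam 0%N).
  exists (\sum_(i < size A) lam i.+1 * (nth (0,0)%N A i).1,
          \sum_(i < size A) lam i.+1 * (nth (0,0)%N A i).2)%N.
  split; first by exists (fun i => lam i.+1).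
  by rewrite /= !big_ord_recl.
- move=> [n [y [[lam ->] ->]]].
  exists (fun i => if i is j.+1 then lam j else n).
  by rewrite /= !big_ord_recl.
Qed.
Lemma gen_mem A a : a \in A -> gen A a.
Proof.
elim: A => [|b A IH] //; rewrite in_cons => /orP[/eqP->|Ha].
- apply/gen_cons; exists 1%N, (0,0)%N; split; first exact: gen_zero.
  by case: b => ? ?; rewrite /ptadd /ptscale /= !mul1n !addn0.
- apply/gen_cons; exists 0%N, a; split; first exact: IH.
  by rewrite ptadd0.
Qed.
Lemma G_gen A x : G A x -> gen A x.
Proof.
elim=> [|a y Ha _ IH]; first exact: gen_zero.
apply: (gen_add (gen_mem Ha) IH).
Qed.
Lemma gen_G A x : gen A x -> G A x.
Proof.
elim: A x => [|b A IH] x; first by move/gen_nil ->; exact: G0.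
move/gen_cons=> [n [y [Hy ->]]]; apply: G_add.
  apply: G_scale; exact: mem_head.
apply: G_sub (IH _ Hy) => z Hz; by rewrite in_cons Hz orbT.
Qed.

Definition OL g (x : pt) := on_line g (embQ x).

Section OLs.
Local Open Scope ring_scope.

Lemma OL_scale g k : OL g (ptscale k g).
Proof. exists k%:R; by rewrite /embQ /ptscale /= !natrM. Qed.

Lemma OL_add g u v : OL g u -> OL g v -> OL g (ptadd u v).
Proof.
move=> [t [H1 H2]] [t' [H1' H2']]; exists (t + t').
by rewrite /embQ /ptadd /= !natrD !mulrDl H1 H2 H1' H2'.
Qed.

Lemma OL_sub g u v : OL g (ptadd u v) -> OL g u -> OL g v.
Proof.
rewrite /OL /embQ /ptadd /=.
move=> [t [H1 H2]] [t' [H1' H2']]; exists (t - t').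
rewrite !mulrBl -H1 -H2 -H1' -H2' !natrD.
congr pair; ring.
Qed.

Lemma cone_gen A u : gen A u -> cone A (embQ u).
Proof.
move=> [lam ->]; exists (fun i => (lam i)%:R); split=> [i|]; first exact: ler0n.
by rewrite /embQ /= !natr_sum; congr pair; apply: eq_bigr => i _; rewrite natrM.
Qed.

Lemma ext_OL A g u v :
  (forall x y : rat * rat, cone A x -> cone A y ->
    on_line g (x.1 + y.1, x.2 + y.2) -> on_line g x /\ on_line g y) ->
  gen A u -> gen A v -> OL g (ptadd u v) -> OL g u /\ OL g v.
Proof.
move=> H Hu Hv Huv; apply: H; [exact: cone_gen|exact: cone_gen|].
by move: Huv; rewrite /OL /embQ /ptadd /= !natrD.
Qed.
End OLs.

Lemma gs_off g1 gs gi : is_min_gens (g1::gs) (gen (g1::gs)) ->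
  (forall x, OL g1 x -> gen [:: g1] x) -> gi \in gs -> ~ OL g1 gi.
Proof.
move=> [uA [_ minA]] line1 Hgi Hon.
have [n Hn] : exists n, gi = ptscale n g1.
  move/line1/gen_cons: Hon => [n [y [/gen_nil -> ->]]]; exists n.
  exact: ptaddx0.
have g1gi : g1 != gi.
  apply/eqP => E; move: uA; by rewrite /= E Hgi.
pose B' := [seq z <- g1 :: gs | z != gi].
have sub : {subset B' <= g1 :: gs} by move=> z; rewrite mem_filter => /andP[].
have hB : forall x, gen (g1::gs) x <-> gen B' x.
  move=> x; split=> /gen_G H; apply: G_gen.
  - apply: G_trans H => a Ha; case: (eqVneq a gi) => [->|ne].
      rewrite Hn; apply: G_scale; by rewrite mem_filter g1gi mem_head.
    apply: G_mem; by rewrite mem_filter ne.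
  - exact: G_sub H.
have := minA B' sub hB gi.
by rewrite mem_filter eqxx /= in_cons Hgi orbT => /(_ isT).
Qed.

Lemma path_last_ge l t : path ltn l t -> (l <= last l t)%N.
Proof.
elim: t l => [|m t IH] l //= /andP[lm pm].
exact: leq_trans (ltnW lm) (IH m pm).
Qed.

Theorem lemma2p4 (g1 : pt) (gs : seq pt) (lam : seq nat) :
  (* {g1, ..., gp} = g1 :: gs is the minimal system of generators of F *)
  is_min_gens (g1 :: gs) (gen (g1 :: gs)) ->
  (* tau = Q g1 is an extremal ray of F *)
  extremal_ray (g1 :: gs) g1 ->
  (* g1 generates N^2 cap tau *)
  (forall x : pt, on_line g1 (embQ x) -> gen [:: g1] x) ->
  (* 0 < lambda_1 < ... < lambda_t, t >= 1 *)
  lam != [::] -> (0 < head 0 lam)%N -> sorted ltn lam ->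
  (* {s_1,...,s_t}, s_i = lambda_i g1, is a minimal system of generators *)
  is_min_gens [seq ptscale l g1 | l <- lam] (gen [seq ptscale l g1 | l <- lam]) ->
  let s := [seq ptscale l g1 | l <- lam] in
  let B1 := s ++ gs in
  let B2 := flatten [seq [seq ptadd gi (ptscale k g1) | k <- iota 1 (last 0 lam).-1]
                    | gi <- gs] in
  let B := B1 ++ B2 in
  (forall x : pt, (gen B x /\ on_line g1 (embQ x)) <-> gen s x) /\
  (forall x : pt, (gen B x /\ ~ on_line g1 (embQ x)) <->
                  (gen (g1 :: gs) x /\ ~ on_line g1 (embQ x))).
Proof.
move=> minA [_ [_ ext]] line1 lam_nz hd_pos srt _ s B1 B2 B.
set A := g1 :: gs.
set L := last 0%N lam.
have HL : (0 < L)%N.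
  move: lam_nz hd_pos srt; rewrite /L; clear L B B2 B1 s; case: lam => [|l t] //= _ Hl Hp.
  exact: leq_trans Hl (path_last_ge Hp).
have sL : ptscale L g1 \in B.
  rewrite /B /B1 !mem_cat; apply/orP; left; apply/orP; left.
  apply: map_f; rewrite /L; move: lam_nz; clear HL L B B2 B1 s hd_pos srt; case: lam => [|l t] //= _.
  exact: mem_last.
have gsB : forall gi, gi \in gs -> gi \in B.
  by move=> gi H; rewrite /B /B1 !mem_cat H orbT.
have B2mem : forall gi m, gi \in gs -> (0 < m < L)%N ->
    ptadd gi (ptscale m g1) \in B.
  move=> gi m Hgi Hm; rewrite /B mem_cat; apply/orP; right.
  apply/flatten_mapP; exists gi => //; apply: map_f.
  rewrite mem_iota; lia.
have g1A : g1 \in A by exact: mem_head.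
have BinA : forall b, b \in B -> G A b.
  move=> b; rewrite /B /B1 !mem_cat => /orP[/orP[|]|].
  - move=> /mapP[l _ ->]; exact: G_scale.
  - move=> H; apply: G_mem; by rewrite in_cons H orbT.
  - move=> /flatten_mapP[gi Hgi /mapP[k _ ->]].
    apply: G_add; last exact: G_scale.
    apply: G_mem; by rewrite in_cons Hgi orbT.
have off := gs_off minA line1.
split=> x; split.
- move=> [/gen_G HB Hx]; apply: G_gen; elim: HB Hx => [|b y Hb Hy IH] Hby.
    exact: G0.
  have [Ob Oy] := ext_OL ext (G_gen (BinA b Hb)) (G_gen (G_trans BinA Hy)) Hby.
  move: Hb; rewrite /B /B1 !mem_cat => /orP[/orP[|]|] Hb.
  + exact: GS Hb (IH Oy).
  + by case: (off b Hb).
  + move: Hb Ob => /flatten_mapP[gi Hgi /mapP[k _ ->]] Ob.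
    have Agi : gen A gi by apply: gen_mem; rewrite in_cons Hgi orbT.
    have Ak : gen A (ptscale k g1) by apply: G_gen; exact: G_scale.
    by case: (off gi Hgi); case: (ext_OL ext Agi Ak Ob).
- move=> /gen_G Hs; split.
    apply: G_gen; apply: G_sub Hs => z Hz; by rewrite /B /B1 !mem_cat Hz.
  elim: Hs => [|b y Hb _ IH]; first exact: (OL_scale g1 0).
  apply: OL_add IH; move: Hb => /mapP[l _ ->]; exact: OL_scale.
- move=> [/gen_G HB Hx]; split=> //; apply: G_gen; exact: G_trans BinA HB.
- move=> [/gen_G HA Hx]; split=> //; apply: G_gen.
  have key : forall z, G A z -> (exists a, z = ptscale a g1) \/
      (forall r, (r < L)%N -> G B (ptadd z (ptscale r g1))).
    move=> z; elim=> [|a y Ha Hy IH].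
      by left; exists 0%N.
    move: Ha; rewrite in_cons => /orP[/eqP->|Hgi].
    + case: IH => [[b ->]|IH].
        by left; exists b.+1; rewrite ptscaleS.
      right=> r Hr.
      have -> : ptadd (ptadd g1 y) (ptscale r g1) = ptadd y (ptscale r.+1 g1)
        by ptsolve.
      case: (ltnP r.+1 L) => Hr'; first exact: IH.
      have Er : r.+1 = L by lia.
      rewrite Er.
      have -> : ptadd y (ptscale L g1) = ptadd (ptscale L g1) (ptadd y (ptscale 0 g1))
        by ptsolve.
      exact: G_add (G_mem sL) (IH 0%N HL).
    + case: IH => [[b ->]|IH].
        right=> r Hr.
        have -> : ptadd (ptadd a (ptscale b g1)) (ptscale r g1) =
                  ptadd (ptscale (b + r) g1) a by ptsolve.
        rewrite (divn_eq (b + r) L) ptscaleD ptscaleM -ptaddA.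
        apply: G_add; first exact: G_scale.
        case: (posnP ((b + r) %% L)) => [->|Hm].
          rewrite ptadd0; exact: G_mem (gsB a Hgi).
        rewrite ptaddC; apply: G_mem; apply: B2mem => //.
        by rewrite Hm ltn_pmod.
      right=> r Hr; rewrite -ptaddA.
      exact: G_add (G_mem (gsB a Hgi)) (IH r Hr).
  case: (key x HA) => [[a Ea]|H].
    by case: Hx; rewrite Ea; exact: OL_scale.
  have := H 0%N HL; by rewrite ptaddx0.
Qed.
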